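(* Let $d\ge 1$, $\delta>0$, $N\ge 1$, let $\varphi_1,\dots,\varphi_N\in\mathbb{S}^{d-1}$ be arbitrary (deterministic) unit vectors, and let $\psi\in\mathbb{S}^{d-1}$. Let $\epsilon_1,\dots,\epsilon_N$ be i.i.d. random variables uniformly distributed on $[-\delta,\delta]$. Define $$P_N=\bigcap_{n=1}^N\{u\in\mathbb{R}^d:\ |\langle u,\varphi_n\rangle-\epsilon_n|\le\delta\},\qquad R_N(\psi)=\sup\{r\ge 0:\ r\psi\in P_N\}\in[0,\infty].$$ Then $$\mathbb{E}|R_N(\psi)|^2\ \ge\ \frac{8\delta^2}{(N+1)(N+2)}.$$
   Context: $P_N$ is the error polytope of consistent reconstruction: if $q_n=\langle x,\varphi_n\rangle+\epsilon_n$ and $\tilde x$ satisfies $|\langle\tilde x,\varphi_n\rangle-q_n|\le\delta$ for all $n$, then $x-\tilde x\in P_N$. $R_N(\psi)$ is the radial size of $P_N$ in the direction $\psi$. *)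

(* Defs.v *)
From HB Require Import structures.
From mathcomp Require Import all_boot all_order all_algebra.
From mathcomp Require Import all_classical all_reals all_analysis.
Set Implicit Arguments. Unset Strict Implicit. Unset Printing Implicit Defensive.
Import Order.TTheory GRing.Theory Num.Theory.
Import numFieldNormedType.Exports.
Local Open Scope classical_set_scope.
Local Open Scope ring_scope.

Definition dotv (R : realType) (d : nat) (u v : 'rV[R]_d) : R :=
  \sum_(i < d) u 0 i * v 0 i.

Definition unit_vec (R : realType) (d : nat) (u : 'rV[R]_d) : Prop :=
  dotv u u = 1.

Definition polytope (R : realType) (d N : nat) (phi : 'I_N -> 'rV[R]_d)
  (delta : R) (eps : 'I_N -> R) : set 'rV[R]_d :=
  [set u | forall n : 'I_N, `| dotv u (phi n) - eps n | <= delta].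

Definition radial_size (R : realType) (d N : nat) (phi : 'I_N -> 'rV[R]_d)
  (delta : R) (eps : 'I_N -> R) (psi : 'rV[R]_d) : \bar R :=
  ereal_sup [set r%:E | r in [set r : R | 0 <= r /\ polytope phi delta eps (r *: psi)]].

Definition uniform_on (d0 : measure_display) (T : measurableType d0) (R : realType)
  (P : probability T R) (delta : R) (X : T -> R) : Prop :=
  forall A : set R, measurable A ->
    P (X @^-1` A) = (lebesgue_measure (A `&` [set x : R | (- delta <= x <= delta)%R]) / (2 * delta)%:E)%E.

Definition mutually_independent (d0 : measure_display) (T : measurableType d0)
  (R : realType) (P : probability T R) (N : nat) (X : 'I_N -> T -> R) : Prop :=
  forall A : 'I_N -> set R, (forall n, measurable (A n)) ->
    P (\bigcap_(n in [set: 'I_N]) (X n @^-1` A n)) =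
    (\prod_(n < N) P (X n @^-1` A n))%E.

(* Main.v *)
Require Import Defs.
From HB Require Import structures.
From mathcomp Require Import all_boot all_order all_algebra.
From mathcomp Require Import all_classical all_reals all_analysis.
From mathcomp Require Import ring lra.
Import Order.TTheory GRing.Theory Num.Theory.
Import numFieldNormedType.Exports.
Local Open Scope classical_set_scope.
Local Open Scope ring_scope.
Global Instance is_derive_pow (R : realType) (f : R -> R) (n : nat) (x df : R) :
  is_derive x 1 f df ->
  is_derive x 1 (fun y => f y ^+ n) (n%:R * f x ^+ n.-1 * df).
Proof.
move=> H; have := is_deriveX n H; rewrite exprfctE => H2.
exact H2.
Qed.
Lemma alg1 (R: realType) (a t u:R) (N : nat) : a != 0 -> 
  - (2 * a ^+ 2) * (N.+1%:R^-1 * (N.+1%:R * t * - (a^-1 * 1)) - N.+2%:R^-1 * (N.+2%:R * ((1 - u/a) * t) * - (a^-1*1))) = 2 * u * t.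
Proof.
move=> ha.
field; rewrite ha /= !gt_eqF //; have := ler0n R N; lra.
Qed.
Lemma q_derive (R : realType) (a : R) (N : nat) (u : R) : 0 < a ->
  is_derive u 1 (fun u => - (2 * a^+2) * ((1 - u / a) ^+ N.+1 / N.+1%:R - (1 - u / a) ^+ N.+2 / N.+2%:R))
     (2 * u * (1 - u / a) ^+ N).
Proof.
move=> a0.
apply: is_derive_eq.
rewrite !scaler0 !add0r !mul1r /=.
rewrite -[X in X = _]/(- (2 * a ^+ 2) * (N.+1%:R^-1 * (N.+1%:R * (1 - u / a) ^+ N * - (a^-1 * 1)) - N.+2%:R^-1 * (N.+2%:R * (1 - u / a) ^+ N.+1 * - (a^-1*1)))).
rewrite [(1 - u/a)^+N.+1]exprS; exact (@alg1 R a ((1 - u/a)^+N) u N (lt0r_neq0 a0)).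
Qed.
Definition qpol {R : realType} (a : R) (N : nat) (u : R) : R :=
  - (2 * a^+2) * ((1 - u / a) ^+ N.+1 / N.+1%:R - (1 - u / a) ^+ N.+2 / N.+2%:R).

Lemma int_g (R : realType) (a : R) (N : nat) : 0 < a ->
  (\int[lebesgue_measure]_(x in `[0%R, (a^+2)%R]) ((1 - Num.sqrt x / a) ^+ N)%R%:E =
    (2 * a^+2 / (N.+1%:R * N.+2%:R))%R%:E)%E.
Proof.
move=> a0.
have qd := fun u => @q_derive R a N u a0.
have qc : forall u, {for u, continuous (qpol a N)}.
  move=> u; apply: differentiable_continuous; apply/derivable1_diffP.
  rewrite /qpol. exact: (@ex_derive _ _ _ _ _ _ _ (qd u)).
have pc : forall u, {for u, continuous (fun u : R => (1 - u / a) ^+ N)}.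
  move=> u; apply: differentiable_continuous; apply/derivable1_diffP.
  have [d hd] : exists d, is_derive u 1 (fun u : R => (1 - u / a) ^+ N) d.
    by eexists; apply: is_derive_eq; reflexivity.
  exact: (@ex_derive _ _ _ _ _ _ _ hd).
have -> : (fun x : R => EFin ((1 - Num.sqrt x / a) ^+ N)%R) = (fun x => EFin (((fun u : R => (1 - u / a) ^+ N) \o Num.sqrt) x)) by [].
rewrite (continuous_FTC2 (F := qpol a N \o Num.sqrt)).
- rewrite -EFinB; congr (_%:E); rewrite /= sqrtr0 sqrtr_sqr ger0_norm ?(ltW a0) // /qpol.
  rewrite divff ?lt0r_neq0 // subrr !expr0n /= !mul0r !subr0 !expr1n.
  have h1 : (N.+1%:R : R) != 0 by rewrite pnatr_eq0.
  have h2 : (N.+2%:R : R) != 0 by rewrite pnatr_eq0.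
  field; rewrite !gt_eqF //; have := ler0n R N; lra.
- by rewrite exprn_gt0.
- apply: continuous_subspaceT => x; exact: continuous_comp (@sqrt_continuous R x) (pc _).
- split.
  + move=> x /[!in_itv]/= /andP[x0 _].
    have := is_derive1_comp (qd (Num.sqrt x)) (is_derive1_sqrt x0).
    by move=> H; exact: (@ex_derive _ _ _ _ _ _ _ H).
  + apply: cvg_at_right_filter; exact: continuous_comp (@sqrt_continuous R _) (qc _).
  + apply: cvg_at_left_filter; exact: continuous_comp (@sqrt_continuous R _) (qc _).
- move=> x /[!in_itv]/= /andP[x0 _]; rewrite derive1E.
  rewrite (@derive_val _ _ _ _ _ _ _ (is_derive1_comp (qd (Num.sqrt x)) (is_derive1_sqrt x0))) /=.
  rewrite mulrAC divff ?mul1r // mulf_neq0 // gt_eqF // sqrtr_gt0 //.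
Qed.
Definition Gfun {R : realType} (a : R) (N : nat) (r : R) : R :=
  if r <= a^+2 then (1 - Num.sqrt r / a) ^+ N else 0.

Lemma int_G (R : realType) (a : R) (N : nat) : 0 < a ->
  (\int[lebesgue_measure]_(x in `[0%R, +oo[) (Gfun a N x)%:E =
    (2 * a^+2 / (N.+1%:R * N.+2%:R))%R%:E)%E.
Proof.
move=> a0; rewrite -int_g // integral_mkcond [RHS]integral_mkcond.
apply: eq_integral => r _; rewrite !patchE /Gfun.
rewrite !mem_setE !in_itv /= andbT.
by case: (0 <= r) => /=; case: (r <= a^+2).

Qed.

Definition sgb {R : realType} (b : bool) : R := if b then 1 else -1.
Definition hfun {R : realType} (b : bool) (del x : R) : R :=
  (del + sgb b * x) * \1_(`[- del, del]) x.

Lemma hfun_meas (R : realType) b (del : R) : measurable_fun setT (hfun b del).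
Proof.
rewrite /hfun; apply: measurable_realfun.measurable_funM; last exact: measurable_realfun.measurable_indic.
apply: measurable_realfun.continuous_measurable_fun => x.
apply: continuousD; first exact: cst_continuous.
apply: continuousM; [exact: cst_continuous | exact: cvg_id].
Qed.

Lemma hfun_in (R : realType) b (del x : R) : `|x| <= del -> hfun b del x = del + sgb b * x.
Proof.
move=> hx; rewrite /hfun indicE mem_set ?mulr1 //= in_itv /=.
by rewrite -ler_norml.
Qed.

Lemma hfun_out (R : realType) b (del x : R) : del < `|x| -> hfun b del x = 0.
Proof.
move=> hx; rewrite /hfun indicE memNset ?mulr0 //= in_itv /=.
by rewrite -ler_norml; apply/negP; rewrite -ltNge.
Qed.

Lemma hfun_ge0 (R : realType) b (del x : R) : 0 <= del -> 0 <= hfun b del x.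
Proof.
move=> d0; case: (lerP `|x| del) => hx; last by rewrite hfun_out.
rewrite hfun_in //; move: hx; rewrite ler_norml /sgb => /andP[h1 h2].
by case: b; lra.
Qed.

Lemma hfun_pre (R : realType) b (del t : R) : 0 < del -> 0 <= t < 2 * del ->
  lebesgue_measure (hfun b del @^-1` `]t, +oo[ `&` [set x | (- del <= x <= del)%R]) =
  (2 * del - t)%:E.
Proof.
move=> d0 /andP[t0 t2].
have -> : hfun b del @^-1` `]t, +oo[ `&` [set x | (- del <= x <= del)%R] =
   [set` (if b then `]t - del, del] else `[- del, del - t[)%R].
  apply/seteqP; split => x /=.
  - rewrite in_itv /= andbT => -[tx /andP[x1 x2]].
    rewrite hfun_in ?ler_norml ?x1 ?x2 // /sgb in tx.
    by case: b tx => /= tx; rewrite in_itv /=; apply/andP; split; lra.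
  - case: b => /=; rewrite in_itv /= => /andP[x1 x2].
    + have hx : `|x| <= del by rewrite ler_norml; apply/andP; split; lra.
      rewrite in_itv /= andbT hfun_in // /sgb; split; [lra | apply/andP; split; lra].
    + have hx : `|x| <= del by rewrite ler_norml; apply/andP; split; lra.
      rewrite in_itv /= andbT hfun_in // /sgb; split; [lra | apply/andP; split; lra].
rewrite lebesgue_measure_itv; case: b => /=.
- by rewrite lte_fin ifT; [rewrite -EFinB; congr EFin; lra | lra].
- by rewrite lte_fin ifT; [rewrite -EFinB; congr EFin; lra | lra].
Qed.

Definition Vfun {R : realType} {N : nat} (b : 'I_N -> bool) (del : R) (e : 'I_N -> R) : R :=
  \big[Order.min/(2 * del)]_(n < N) hfun (b n) del (e n).

Lemma V_gt (R : realType) N (b : 'I_N -> bool) (del t : R) e : t < 2 * del ->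
  (t < Vfun b del e) = [forall n, t < hfun (b n) del (e n)].
Proof.
move=> t2; apply/idP/forallP => [H n|H].
- exact: lt_le_trans H (bigmin_le _ _ _).
- exact: lt_bigmin.
Qed.

Lemma V_ge0 (R : realType) N (b : 'I_N -> bool) (del : R) e : 0 <= del -> 0 <= Vfun b del e.
Proof.
move=> d0; apply: le_bigmin => [|n _]; first lra.
exact: hfun_ge0.
Qed.

Lemma V_le (R : realType) N (b : 'I_N -> bool) (del : R) e : Vfun b del e <= 2 * del.
Proof. exact: bigmin_le_id. Qed.

Lemma V_le_h (R : realType) N (b : 'I_N -> bool) (del : R) e n : Vfun b del e <= hfun (b n) del (e n).
Proof. exact: bigmin_le. Qed.

Lemma meas_bigmin d (T : measurableType d) (R : realType) (I : Type) (s : seq I) (x : R)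
  (F : I -> T -> R) : (forall i, measurable_fun setT (F i)) ->
  measurable_fun setT (fun w => \big[Order.min/x]_(i <- s) F i w).
Proof.
move=> mF; elim: s => [|i s IH].
  by under eq_fun do rewrite big_nil; exact: measurable_cst.
under eq_fun do rewrite big_cons.
exact: measurable_realfun.measurable_minr.
Qed.

Lemma V_meas d (T : measurableType d) (R : realType) N (b : 'I_N -> bool) (del : R)
  (eps : 'I_N -> T -> R) : (forall n, measurable_fun setT (eps n)) ->
  measurable_fun setT (fun w => Vfun b del (fun n => eps n w)).
Proof.
move=> me; rewrite /Vfun; apply: meas_bigmin => n.
exact (measurableT_comp (@hfun_meas R (b n) del) (me n)).
Qed.

Lemma dotvZ (R : realType) d (r : R) (u v : 'rV[R]_d) : dotv (r *: u) v = r * dotv u v.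
Proof. by rewrite /dotv mulr_sumr; apply: eq_bigr => i _; rewrite mxE mulrA. Qed.

Lemma dotv_le1 (R : realType) d (u v : 'rV[R]_d) : unit_vec u -> unit_vec v -> `|dotv u v| <= 1.
Proof.
rewrite /unit_vec => hu hv.
have e1 : \sum_(i < d) (u 0 i - v 0 i) ^+ 2 = dotv u u + dotv v v - 2 * dotv u v.
  rewrite /dotv mulr_sumr -big_split -sumrB /=; apply: eq_bigr => i _; ring.
have e2 : \sum_(i < d) (u 0 i + v 0 i) ^+ 2 = dotv u u + dotv v v + 2 * dotv u v.
  rewrite /dotv mulr_sumr -!big_split /=; apply: eq_bigr => i _; ring.
have s1 : 0 <= \sum_(i < d) (u 0 i - v 0 i) ^+ 2 by apply: sumr_ge0 => i _; exact: sqr_ge0.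
have s2 : 0 <= \sum_(i < d) (u 0 i + v 0 i) ^+ 2 by apply: sumr_ge0 => i _; exact: sqr_ge0.
rewrite e1 hu hv in s1; rewrite e2 hu hv in s2.
rewrite ler_norml; apply/andP; split; lra.
Qed.

Lemma rad_bound (R : realType) d N (phi : 'I_N -> 'rV[R]_d) (psi : 'rV[R]_d) (del : R) (e : 'I_N -> R) :
  0 < del -> (forall n, unit_vec (phi n)) -> unit_vec psi ->
  ((Vfun (fun n => 0 <= dotv psi (phi n)) del e * Vfun (fun n => 0 <= dotv psi (phi n)) del e)%:E <=
    radial_size phi del e psi * radial_size phi del e psi)%E.
Proof.
move=> d0 hphi hpsi.
set b := (fun n => 0 <= dotv psi (phi n)).
set V := Vfun b del e.
have V0 : 0 <= V by apply: V_ge0; lra.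
case: (boolP [exists n, del < `|e n|]) => [/existsP [n hn] | /existsPn hno].
- have -> : V = 0.
    apply/eqP; rewrite eq_le V0 andbT.
    by have := @V_le_h R N b del e n; rewrite hfun_out.
  rewrite mulr0.
  case: (radial_size phi del e psi) => [r||] /=.
  + by rewrite -EFinM lee_fin -expr2 sqr_ge0.
  + by rewrite mulyy leey.
  + by rewrite mulNyNy leey.
- have hin : forall n, `|e n| <= del by move=> n; rewrite leNgt hno.
  have feas : polytope phi del e (V *: psi).
    move=> n; rewrite dotvZ.
    have hVn : V <= hfun (b n) del (e n) := @V_le_h R N b del e n.
    rewrite hfun_in // /sgb /b in hVn; move: hVn.
    have := @dotv_le1 R d _ _ hpsi (hphi n); rewrite ler_norml => /andP[a1 a2].
    have := hin n; rewrite ler_norml => /andP[e1 e2].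
    rewrite ler_norml.
    case: (lerP 0 (dotv psi (phi n))) => ha hV; apply/andP; split; nra.
  have VR : (V%:E <= radial_size phi del e psi)%E.
    by apply: ereal_sup_ubound; exists V.
  rewrite EFinM; apply: lee_pmul => //.
Qed.

Lemma ccdf_val d0 (T : measurableType d0) (R : realType) (P : probability T R) N
  (b : 'I_N -> bool) (del : R) (eps : 'I_N -> T -> R) (r : R) :
  0 < del -> (1 <= N)%N -> (forall n, measurable_fun setT (eps n)) ->
  (forall n, uniform_on P del (eps n)) -> mutually_independent P eps -> 0 <= r ->
  P ((fun w => Vfun b del (fun n => eps n w) * Vfun b del (fun n => eps n w)) @^-1` `]r, +oo[) =
  (Gfun (2 * del) N r)%:E.
Proof.
move=> del0 N1 meps hunif hind r0.
set V := fun w => Vfun b del (fun n => eps n w).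
have V0 : forall w, 0 <= V w by move=> w; apply: V_ge0; lra.
have V2 : forall w, V w <= 2 * del by move=> w; exact: V_le.
have a0 : 0 < 2 * del by lra.
case: (ltrP r ((2 * del) ^+ 2)) => hr.
- set t := Num.sqrt r.
  have t0 : 0 <= t by exact: sqrtr_ge0.
  have t2 : t < 2 * del.
    by rewrite -(ltr_pXn2r (n := 2)) // ?nnegrE ?sqr_sqrtr // ltW.
  pose A := fun n : 'I_N => hfun (b n) del @^-1` `]t, +oo[.
  have mA : forall n, measurable (A n).
    move=> n; rewrite /A -[X in measurable X]setTI.
    exact: (@hfun_meas R (b n) del measurableT _ (measurable_itv _)).
  have -> : (fun w => V w * V w) @^-1` `]r, +oo[ = \bigcap_(n in [set: 'I_N]) (eps n @^-1` A n).
    apply/seteqP; split => w /=.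
    - rewrite in_itv /= andbT => hw n _ /=; rewrite /A /= in_itv /= andbT.
      have : t < V w by rewrite -(ltr_pXn2r (n := 2)) // ?nnegrE ?sqr_sqrtr // expr2.
      by rewrite /V V_gt // => /forallP; apply.
    - move=> hw; rewrite in_itv /= andbT.
      have : t < V w.
        rewrite /V V_gt //; apply/forallP => n.
        by have := hw n I; rewrite /A /= in_itv /= andbT.
      by rewrite -(ltr_pXn2r (n := 2)) // ?nnegrE ?sqr_sqrtr // expr2.
  rewrite hind //.
  have hp : forall n, P (eps n @^-1` A n) = (((2 * del - t) / (2 * del))%:E).
    move=> n; rewrite hunif // hfun_pre //; last by rewrite t0 t2.
    by rewrite EFinM inver gt_eqF.
  under eq_bigr do rewrite hp.
  rewrite prodEFin big_const_ord iter_mulr_1 /Gfun ltW //.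
  congr (_%:E); congr (_ ^+ _); rewrite /t; field; exact: lt0r_neq0.
- have -> : (fun w => V w * V w) @^-1` `]r, +oo[ = set0.
    apply/seteqP; split => w //=; rewrite in_itv /= andbT => hw.
    have : V w * V w <= (2 * del) ^+ 2.
      by rewrite -expr2; rewrite ler_pXn2r ?nnegrE ?V2 ?V0 //; lra.
    lra.
  rewrite measure0 /Gfun; case: ifPn => // hle.
  have -> : r = (2 * del) ^+ 2 by apply/eqP; rewrite eq_le hle hr.
  by rewrite sqrtr_sqr ger0_norm ?divff ?subrr ?expr0n -?lt0n ?gt_eqF ?(ltW a0).
Qed.

Lemma ge0_le_integral_nm d (T : measurableType d) (R : realType) (mu : {measure set T -> \bar R}) (f g : T -> \bar R) :
  (forall x, 0 <= f x)%E -> (forall x, f x <= g x)%E -> (\int[mu]_x f x <= \int[mu]_x g x)%E.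
Proof.
move=> f0 fg; rewrite !ge0_integralTE //; last by move=> x; exact: le_trans (f0 x) (fg x).
apply: le_ereal_sup => _ [h hf <-]; exists h => //= x; exact: le_trans (hf x) (fg x).
Qed.

Theorem proposition3p1 (R : realType) (d0 : measure_display) (T : measurableType d0)
  (P : probability T R) (d N : nat) (delta : R)
  (phi : 'I_N -> 'rV[R]_d) (psi : 'rV[R]_d) (eps : 'I_N -> T -> R) :
  (1 <= d)%N -> 0 < delta -> (1 <= N)%N ->
  (forall n, unit_vec (phi n)) -> unit_vec psi ->
  (forall n, measurable_fun setT (eps n)) ->
  (forall n, uniform_on P delta (eps n)) ->
  mutually_independent P eps ->
  ((8 * delta ^+ 2 / ((N%:R + 1) * (N%:R + 2)))%:E <=
   \int[P]_w (radial_size phi delta (fun n => eps n w) psi *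
              radial_size phi delta (fun n => eps n w) psi))%E.
Proof.
move=> d1 del0 N1 hphi hpsi meps hunif hind.
set b := (fun n => 0 <= dotv psi (phi n)).
pose V w := Vfun b delta (fun n => eps n w).
pose X w := V w * V w.
have mV : measurable_fun setT V := @V_meas _ T R N b delta eps meps.
have mX : measurable_fun setT X := measurable_realfun.measurable_funM mV mV.
have X0 : forall w, 0 <= X w by move=> w; apply: mulr_ge0; apply: V_ge0; lra.
apply: (le_trans _ (@ge0_le_integral_nm _ T R P (fun w => (X w)%:E) _ _ _)); last 2 first.
- by move=> w; rewrite lee_fin.
- by move=> w; exact: rad_bound.
have Xin : X \in mfun by apply/mem_set; exact: mX.
pose XR : {RV P >-> R} := mfun_Sub Xin.
have -> : (\int[P]_w (X w)%:E)%E = ('E_P[XR])%E by rewrite expectation_def.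
rewrite ge0_expectation_ccdf //.
have -> : (\int[lebesgue_measure]_(r in `[0%R, +oo[) ccdf XR r)%E =
   (\int[lebesgue_measure]_(r in `[0%R, +oo[) (Gfun (2 * delta) N r)%:E)%E.
  apply: eq_integral.
  move=> r; rewrite inE /= in_itv /= andbT => r0.
  exact: (@ccdf_val _ T R P N b delta eps r del0 N1 meps hunif hind r0).
rewrite int_G; last lra.
rewrite lee_fin le_eqVlt; apply/orP; left; apply/eqP.
rewrite -!natr1 /=.
have h1 : (N%:R + 1 : R) != 0 by rewrite gt_eqF //; have := ler0n R N; lra.
have h2 : (N%:R + 2 : R) != 0 by rewrite gt_eqF //; have := ler0n R N; lra.
field; rewrite ?andbT !gt_eqF //; have := ler0n R N; lra.
Qed.
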